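(* The characters (non-zero complex homomorphisms, not necessarily continuous) of $C(X)'_{00}$ are, without multiple occurrences, the following, where $\sum_kf_k\delta^k\in C(X)'_{00}$: (i) for $x\notin\bigcup_{q\ge1}\mathrm{Fix}_q(\sigma)^\circ$: $\omega_x\big(\sum_kf_k\delta^k\big)=f_0(x)$; (ii) for $x\in\bigcup_{q\ge1}\mathrm{Fix}_q(\sigma)^\circ$ and $c\in\mathbb{C}\setminus\{0\}$: $\omega_{x,c}\big(\sum_kf_k\delta^k\big)=\sum_jf_{jn}(x)c^j$, where $n$ is the minimal $n\ge1$ such that $x\in\mathrm{Fix}_n(\sigma)^\circ$.
   Context: Let $X$ be a non-empty compact Hausdorff space and $\sigma:X\to X$ a homeomorphism; $\mathrm{Fix}_k(\sigma)=\{x:\sigma^kx=x\}$, superscript $\circ$ denotes interior, $\mathrm{supp}(f)$ the closure of $\{f\ne0\}$. $C(X)$ is the algebra of continuous complex functions. $c_{00}(\Sigma)$ is the unital algebra of finite formal sums $\sum_kf_k\delta^k$ ($f_k\in C(X)$) with multiplication determined by $f\delta^k\cdot g\delta^l=f\,(g\circ\sigma^{-k})\,\delta^{k+l}$; $C(X)$ is embedded as $\{f\delta^0\}$. $C(X)'_{00}$ is the commutant of $C(X)$ in $c_{00}(\Sigma)$; it equals $\{\sum_kf_k\delta^k:\mathrm{supp}(f_k)\subset\mathrm{Fix}_k(\sigma)\ \forall k\}$ and is commutative. *)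

(* Defs.v *)
From HB Require Import structures.
From mathcomp Require Import all_boot all_order all_algebra.
From mathcomp Require Import complex.
From mathcomp Require Import all_classical all_reals all_analysis.
Set Implicit Arguments. Unset Strict Implicit. Unset Printing Implicit Defensive.
Import Order.TTheory GRing.Theory Num.Theory.
Import numFieldNormedType.Exports.
Local Open Scope classical_set_scope.
Local Open Scope ring_scope.

(* the complex numbers, with the analysis (norm) topology of a numFieldType *)
Definition Cplx (R : realType) : numClosedFieldType := R[i].

Section Defs.
Variables (R : realType) (X : topologicalType) (sigma sigmai : X -> X).
Local Notation C := (Cplx R).

(* integer iterates sigma^k, with sigmai the inverse homeomorphism *)
Definition zpow (k : int) : X -> X :=
  match k with Posz n => iter n sigma | Negz n => iter n.+1 sigmai end.

Definition Fix (k : nat) : set X := [set x | iter k sigma x = x].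

Definition UFix : set X := \bigcup_(q in [set q : nat | (0 < q)%N]) (Fix q)°.

Definition min_int_period (x : X) (n : nat) : Prop :=
  (0 < n)%N /\ (Fix n)° x /\ forall m : nat, (0 < m < n)%N -> ~ (Fix m)° x.

(* Formal sums sum_k f_k delta^k are represented by their coefficient
   function k |-> f_k. *)
Definition fsum := int -> X -> C.

Definition c00 : set fsum :=
  [set a | (exists N : nat, forall k : int, (N < `|k|)%N -> a k = (fun=> 0))
           /\ forall k, continuous (a k)].

Definition fadd (a b : fsum) : fsum := fun k x => a k x + b k x.
Definition fscale (l : C) (a : fsum) : fsum := fun k x => l * a k x.
(* f delta^k * g delta^l = f (g o sigma^{-k}) delta^{k+l} *)
Definition fmul (a b : fsum) : fsum :=
  fun m x => \sum_(k \in [set: int]) a k x * b (m - k) (zpow (- k) x).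
Definition emb (f : X -> C) : fsum := fun k => if k == 0 then f else (fun=> 0).

Definition commutant00 : set fsum :=
  [set a | c00 a /\ forall f : X -> C, continuous f ->
                       fmul (emb f) a = fmul a (emb f)].

(* characters: non-zero (not necessarily continuous) complex algebra
   homomorphisms on C(X)'_00; only the values on C(X)'_00 matter *)
Definition is_character (w : fsum -> C) : Prop :=
  [/\ {in commutant00 &, forall a b, w (fadd a b) = w a + w b},
      forall l, {in commutant00, forall a, w (fscale l a) = l * w a},
      {in commutant00 &, forall a b, w (fmul a b) = w a * w b} &
      exists2 a, commutant00 a & w a != 0].

Definition omega1 (x : X) (a : fsum) : C := a 0 x.
Definition omega2 (n : nat) (x : X) (c : C) (a : fsum) : C :=
  \sum_(j \in [set: int]) a (j * n%:Z) x * c ^ j.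

End Defs.

(* Main.v *)
Require Import Defs.
From HB Require Import structures.
From mathcomp Require Import all_boot all_order all_algebra.
From mathcomp Require Import complex.
From mathcomp Require Import all_classical all_reals all_analysis.
From mathcomp Require Import finmap zify ring lra.
Import Order.TTheory GRing.Theory Num.Theory.
Import numFieldNormedType.Exports.
Set Implicit Arguments. Unset Strict Implicit. Unset Printing Implicit Defensive.
Local Open Scope classical_set_scope.
Local Open Scope ring_scope.
Section Sums.
Variable R : realType.
Local Notation C := (Cplx R).

Lemma sum1 (F : int -> C) j0 : (forall j, j != j0 -> F j = 0) ->
  \sum_(j \in [set: int]) F j = F j0.
Proof.
move=> H; rewrite (fsbigTE [fset j0]%fset); first by rewrite big_seq_fset1.
by move=> i; rewrite inE => /H.
Qed.

Definition win (N : nat) : {fset int} :=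
  [fset (i%:Z - N%:Z) | i in iota 0 (2 * N).+1]%fset.

Lemma in_win N (k : int) : (`|k| <= N)%N -> k \in win N.
Proof.
move=> hk; apply/imfsetP; exists (absz (k + N%:Z)).
  rewrite /= ?inE mem_iota /=. lia.
rewrite /=. lia.
Qed.

Definition bnd (F : int -> C) N := forall k : int, (N < `|k|)%N -> F k = 0.

Lemma sumW (F : int -> C) N : bnd F N ->
  \sum_(k \in [set: int]) F k = \sum_(k <- win N) F k.
Proof.
move=> H; apply: fsbigTE => i iN; apply: H.
rewrite ltnNge; apply: contra iN; exact: in_win.
Qed.

Lemma bndW F N M : (N <= M)%N -> bnd F N -> bnd F M.
Proof. by move=> NM H k kM; apply: H; exact: leq_ltn_trans kM. Qed.

Lemma sumD (F G : int -> C) N : bnd F N -> bnd G N ->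
  \sum_(k \in [set: int]) (F k + G k) =
  \sum_(k \in [set: int]) F k + \sum_(k \in [set: int]) G k.
Proof.
move=> hF hG; rewrite (sumW hF) (sumW hG) (@sumW _ N) ?big_split //.
by move=> k kN; rewrite hF // hG // addr0.
Qed.

Lemma sumZ (F : int -> C) l :
  \sum_(k \in [set: int]) l * F k = l * \sum_(k \in [set: int]) F k.
Proof. by rewrite mulr_fsumr. Qed.

Lemma cauchy (A B : int -> C) N (c : C) : c != 0 -> bnd A N -> bnd B N ->
  \sum_(j \in [set: int]) (\sum_(i \in [set: int]) A i * B (j - i)) * c ^ j =
  (\sum_(i \in [set: int]) A i * c ^ i) * (\sum_(l \in [set: int]) B l * c ^ l).
Proof.
move=> c0 hA hB.
rewrite mulr_fsuml.
transitivity (\sum_(i \in [set: int]) \sum_(j \in [set: int]) A i * B (j - i) * c ^ j).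
  under eq_fsbigr do rewrite mulr_fsuml.
  have G1 j : bnd (fun i => A i * B (j - i) * c ^ j) N.
    by move=> i iN; rewrite hA // !mul0r.
  under eq_fsbigr do rewrite (sumW (G1 _)).
  have G2 i : bnd (fun j => A i * B (j - i) * c ^ j) (2 * N).
    move=> j jN; case: (leqP `|i| N) => iN; last by rewrite hA // !mul0r.
    rewrite hB ?mulr0 ?mul0r //. lia.
  under [RHS]eq_fsbigr do rewrite (sumW (G2 _)).
  rewrite (@sumW _ (2 * N)); last first.
    move=> j jN; apply: big1_seq => i /andP[_ iw].
    have : (`|i| <= N)%N.
      by move: iw => /imfsetP [m + ->]; rewrite mem_iota => /andP[_ ?]; lia.
    by move=> iN; rewrite hB ?mulr0 ?mul0r //; lia.
  rewrite (@sumW _ N); first by rewrite exchange_big.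
  move=> i iN; apply: big1_seq => j _; by rewrite hA // !mul0r.
apply: eq_fsbigr => i _.
rewrite mulr_fsumr.
rewrite [RHS](reindex_fsbigT (fun j => j - i) (fun j => A i * c ^ i * (B j * c ^ j))).
  apply: eq_fsbigr => j _.
  have -> : c ^ (j - i) = c ^ j * c ^ (- i) by rewrite expfzDr.
  have e : c ^ i * c ^ (-i) = 1 by rewrite -expfzDr // subrr expr0z.
  by rewrite -[LHS]mulr1 -e; ring.
by exists (fun j => j + i) => j; rewrite ?addrK ?subrK.
Qed.
End Sums.
Section Topo.
Variable R : realType.
Local Notation C := (Cplx R).
Local Open Scope complex_scope.
Definition realC (r : R) : C := r%:C.
Lemma normC_real (r : R) : `|realC r| = realC `|r|.
Proof. rewrite /realC normc_def /= expr0n /= addr0 sqrtr_sqr //. Qed.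
Lemma realC_lt (a b : R) : (realC a < realC b) = (a < b).
Proof. exact: ltcR. Qed.
Lemma realC_le (a b : R) : (realC a <= realC b) = (a <= b).
Proof. exact: lecR. Qed.
Lemma realCB (a b : R) : realC (a - b) = realC a - realC b.
Proof. by rewrite /realC raddfB. Qed.
Lemma realCM (a b : R) : realC (a * b) = realC a * realC b.
Proof. by rewrite /realC rmorphM. Qed.
Lemma realC1 : realC 1 = 1. Proof. by []. Qed.
Lemma realC0 : realC 0 = 0. Proof. by []. Qed.
Lemma gt0_realC (e : C) : 0 < e -> exists2 r : R, 0 < r & e = realC r.
Proof.
destruct e as [a b]; rewrite ltcE /= => /andP[/eqP -> a0].
by exists a.
Qed.

Lemma lipCC (f : C -> C) : (forall a b, `|f a - f b| <= `|a - b|) -> continuous f.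
Proof.
move=> H z. apply/(@cvgrPdist_lt _ _ _ _ (nbhs_filter (z : C))) => e e0.
near=> w.
apply: le_lt_trans (H _ _) _; near: w.
by apply: filterS (nbhsx_ballx z e e0) => w; rewrite -ball_normE.
Unshelve. all: by end_near. Qed.

Lemma lipRC (f : R -> C) : (forall a b, `|f a - f b| <= realC `|a - b|) -> continuous f.
Proof.
move=> H z; apply/(@cvgrPdist_lt _ _ _ _ (nbhs_filter (z : R))) => e /gt0_realC [r r0 ->].
near=> w.
apply: le_lt_trans (H _ _) _; rewrite realC_lt; near: w.
by apply: filterS (nbhsx_ballx z r r0) => w; rewrite -ball_normE.
Unshelve. all: by end_near. Qed.

Lemma lipCR (f : C -> R) : (forall a b, realC `|f a - f b| <= `|a - b|) -> continuous f.
Proof.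
move=> H z; apply/(@cvgrPdist_lt _ _ _ _ (nbhs_filter (z : C))) => e e0; near=> w.
rewrite -realC_lt; apply: le_lt_trans (H _ _) _; near: w.
have e0' : (0 : C) < realC e by rewrite /realC ltcR.
by apply: filterS (nbhsx_ballx z _ e0') => w; rewrite -ball_normE.
Unshelve. all: by end_near. Qed.

Lemma realC_cont : continuous realC.
Proof. by apply: lipRC => a b; rewrite -realCB normC_real. Qed.

Definition nR (z : C) : R := complex.Re `|z|.
Lemma realC_nR z : realC (nR z) = `|z|.
Proof. by rewrite /realC /nR RRe_real // normr_real. Qed.
Lemma nR_ge0 z : 0 <= nR z.
Proof. by rewrite -realC_le realC_nR realC0. Qed.

Lemma nR_cont : continuous nR.
Proof.
apply: lipCR => a b; rewrite -normC_real realCB !realC_nR.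
exact: ler_dist_dist.
Qed.

Lemma conj_cont : continuous (fun z : C => z^*%R).
Proof. by apply: lipCC => a b; rewrite -rmorphB norm_conjC. Qed.

Lemma ccomp (T U V : topologicalType) (f : T -> U) (g : U -> V) :
  continuous f -> continuous g -> continuous (g \o f).
Proof. by move=> cf cg x; apply: continuous_comp; [exact: cf | exact: cg]. Qed.

Definition Sq (z : C) : C := realC (Num.sqrt (nR z)).
Lemma Sq_cont : continuous Sq.
Proof.
apply: (ccomp (f := fun z => Num.sqrt (nR z))) ; last exact: realC_cont.
apply: (ccomp (f := nR)); [exact: nR_cont | exact: sqrt_continuous].
Qed.

Lemma Sq2 z : Sq z ^+ 2 = `|z|.
Proof. by rewrite /Sq /realC -rmorphXn sqr_sqrtr ?nR_ge0 // -realC_nR. Qed.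

Lemma Sq_ge0 z : 0 <= Sq z.
Proof. by rewrite /Sq -realC0 realC_le sqrtr_ge0. Qed.

Lemma Sq0 : Sq 0 = 0.
Proof. by rewrite /Sq /nR normr0 /= sqrtr0. Qed.

Lemma Sq_eq0 z : (Sq z == 0) = (z == 0).
Proof.
apply/idP/idP => [/eqP h|/eqP ->]; last by rewrite Sq0.
by rewrite -normr_eq0 -Sq2 h expr0n.
Qed.

Definition Fq (z : C) : C := z / Sq z.
Lemma FqE z : Sq z * Fq z = z.
Proof.
rewrite /Fq; have [->|z0] := eqVneq z 0; first by rewrite mul0r mulr0.
by rewrite mulrC divfK // Sq_eq0.
Qed.

Lemma normFq z : `|Fq z| = Sq z.
Proof.
rewrite /Fq; have [->|z0] := eqVneq z 0; first by rewrite mul0r normr0 Sq0.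
have s0 : Sq z != 0 by rewrite Sq_eq0.
rewrite normrM normfV (ger0_norm (Sq_ge0 z)) -Sq2 expr2.
by rewrite -mulrA divff // mulr1.
Qed.

Lemma Fq_cont : continuous Fq.
Proof.
move=> z; have [->|z0] := eqVneq z 0.
  apply/(@cvgrPdist_lt _ _ _ _ (nbhs_filter (0 : C))) => e e0.
  have := @Sq_cont 0; move/(@cvgrPdist_lt _ _ _ _ (nbhs_filter (0 : C)))=> /(_ e e0).
  apply: filterS => w; rewrite /Fq Sq0 mul0r !sub0r !normrN normFq.
  by rewrite (ger0_norm (Sq_ge0 w)).
have h1 : {for z, continuous (fun w : C => w)} by move=> ?; exact.
have h2 : {for z, continuous (fun w => (Sq w)^-1)}.
  by apply: continuousV; [rewrite Sq_eq0 | exact: Sq_cont].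
exact: (continuousM h1 h2).
Qed.

Section ContHelpers.
Variables (T : topologicalType) (K : numFieldType).
Lemma cD (f g : T -> K) : continuous f -> continuous g -> continuous (fun y => f y + g y).
Proof. by move=> cf cg x; exact: (continuousD (cf x) (cg x)). Qed.
Lemma cB (f g : T -> K) : continuous f -> continuous g -> continuous (fun y => f y - g y).
Proof. by move=> cf cg x; exact: (continuousB (cf x) (cg x)). Qed.
Lemma cM (f g : T -> K) : continuous f -> continuous g -> continuous (fun y => f y * g y).
Proof. by move=> cf cg x; exact: (continuousM (cf x) (cg x)). Qed.
Lemma cK (c : K) : continuous (fun _ : T => c).
Proof. by move=> x; exact: cvg_cst. Qed.
End ContHelpers.
End Topo.
Section TopoX.
Variables (R : realType) (X : topologicalType).
Hypotheses (hX : hausdorff_space X) (cX : compact [set: X]).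
Local Notation C := (Cplx R).

Lemma bump (x : X) (U : set X) : open U -> U x ->
  exists f : X -> C, [/\ continuous f, f x = 1 & forall y, ~ U y -> f y = 0].
Proof.
move=> oU Ux.
have cr : completely_regular_space X.
  apply: (@normal_completely_regular R).
    exact: compact_normal.
  exact: hausdorff_accessible.
have : uniform_separator [set x] (~` U).
  by apply: cr; [exact: open_closedC | move=> /(_ Ux)].
move=> /(@uniform_separatorP _ R) [g [cg _ g0 g1]].
exists (fun y => realC (1 - g y)); split.
- apply: (ccomp (f := fun y => 1 - g y)); last exact: realC_cont.
  by apply: cB => //; exact: cK.
- have -> : g x = 0 by apply: g0; exists x.
  by rewrite subr0.
- move=> y nUy; have -> : g y = 1 by apply: g1; exists y.
  by rewrite subrr.
Qed.

Lemma separate (x y : X) : x != y ->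
  exists f : X -> C, [/\ continuous f, f x = 1 & f y = 0].
Proof.
move=> xy.
have cl : closed [set y] by apply: accessible_closed_set1; exact: hausdorff_accessible.
have [f [cf fx fy]] := @bump x (~` [set y]) (closed_openC cl) (fun e => (negP xy) (introT eqP e)).
by exists f; split => //; apply: fy => /(_ erefl).
Qed.

Lemma near_neq0 (h : X -> C) x : continuous h -> h x != 0 ->
  \forall y \near x, h y != 0.
Proof.
move=> ch hx.
have e0 : 0 < `|h x| by rewrite normr_gt0.
have := @cvgr_dist_lt _ _ _ _ (nbhs_filter x) _ _ (ch x) _ e0.
apply: filterS => y; apply: contraTneq => ->.
by rewrite subr0 ltxx.
Qed.

End TopoX.
Section Alg.
Variables (R : realType) (X : topologicalType) (sigma sigmai : X -> X).
Hypotheses (hX : hausdorff_space X) (cX : compact [set: X]).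
Hypotheses (cs : continuous sigma) (csi : continuous sigmai).
Hypotheses (can1 : cancel sigma sigmai) (can2 : cancel sigmai sigma).
Local Notation C := (Cplx R).
Local Notation fsum := (fsum R X).
Local Notation zpow := (zpow sigma sigmai).
Local Notation Fix := (Fix sigma).
Local Notation fmul := (fmul sigma sigmai).
Local Notation CM := (commutant00 (R:=R) sigma sigmai).
Local Notation realC := (@realC R).
Local Notation nR := (@nR R).

Lemma cst0 : continuous (fun _ : X => (0 : C)).
Proof. move=> x; exact: cvg_cst. Qed.

Definition single (k : int) (h : X -> C) : fsum :=
  fun m => if m == k then h else (fun=> 0).

Definition good (a : fsum) := c00 a /\ forall k y, a k y != 0 -> zpow (- k) y = y.

Lemma zpow0 y : zpow 0 y = y. Proof. by []. Qed.

Lemma iter_cancel n y : iter n sigma (iter n sigmai y) = y.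
Proof.
elim: n y => // n IH y; by rewrite iterSr iterS can2 IH.
Qed.
Lemma iter_canceli n y : iter n sigmai (iter n sigma y) = y.
Proof.
elim: n y => // n IH y; by rewrite iterSr iterS can1 IH.
Qed.

Lemma zpowN_fix (k : int) y : (zpow (- k) y = y) <-> Fix `|k| y.
Proof.
case: k => [[|n]|n]; first by [].
  change (iter n.+1 sigmai y = y <-> iter n.+1 sigma y = y).
  split=> h.
    by rewrite -{1}h iter_cancel.
  by rewrite -{1}h iter_canceli.
by change (iter n.+1 sigma y = y <-> iter n.+1 sigma y = y).
Qed.

Lemma Fix_mul n m y : Fix n y -> Fix (m * n) y.
Proof.
rewrite /Fix /= => h; elim: m => [|m IH] //=.
by rewrite mulSn iterD IH h.
Qed.

Lemma Fix_mod a b y : Fix a y -> Fix b y -> Fix (a %% b) y.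
Proof.
rewrite /Fix /= => ha hb.
have e : iter a sigma y = iter (a %% b) sigma (iter (a %/ b * b) sigma y).
  by rewrite -iterD addnC -divn_eq.
by rewrite -{2}ha e (Fix_mul (a %/ b) hb).
Qed.

Lemma Fix_gcd a b y : Fix a y -> Fix b y -> Fix (gcdn a b) y.
Proof.
elim/ltn_ind: a b => a IH b ha hb.
rewrite gcdnE; have [a0|a0] := eqVneq a 0%N; first by [].
apply: IH; last exact: ha.
  by apply: ltn_pmod; rewrite lt0n.
exact: Fix_mod.
Qed.


Lemma fmul_embl (f : X -> C) (a : fsum) :
  fmul (emb f) a = fun m y => f y * a m y.
Proof.
apply: funext => m; apply: funext => y.
rewrite /fmul (sum1 (j0 := 0)) /emb ?eqxx ?oppr0 ?subr0 //.
by move=> j /negbTE ->; rewrite mul0r.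
Qed.

Lemma fmul_embr (a : fsum) (f : X -> C) :
  fmul a (emb f) = fun m y => a m y * f (zpow (- m) y).
Proof.
apply: funext => m; apply: funext => y.
rewrite /fmul (sum1 (j0 := m)) /emb ?subrr ?eqxx //.
move=> j jm; rewrite ifN ?mulr0 //.
by rewrite subr_eq0 eq_sym.
Qed.

Lemma fmul_single p q (h g : X -> C) :
  fmul (single p h) (single q g) =
  single (p + q) (fun y => h y * g (zpow (- p) y)).
Proof.
apply: funext => m; apply: funext => y.
rewrite /fmul (sum1 (j0 := p)) /single ?eqxx.
  have -> : (m - p == q) = (m == p + q) by rewrite subr_eq addrC.
  by case: ifP => _; rewrite ?mulr0.
by move=> j /negbTE ->; rewrite mul0r.
Qed.

Lemma good_CM a : good a -> CM a.
Proof.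
move=> [c0 ga]; split => // f cf; rewrite fmul_embl fmul_embr.
apply: funext => m; apply: funext => y.
have [->|a0] := eqVneq (a m y) 0; first by rewrite mulr0 mul0r.
by rewrite (ga _ _ a0) mulrC.
Qed.

Lemma CM_good a : CM a -> good a.
Proof.
move=> [c0 ca]; split => // k y a0.
apply/eqP; apply: contraT => hyz.
have yz : y != zpow (- k) y by rewrite eq_sym.
have [f [cf fy fz]] := @separate R X hX cX y (zpow (- k) y) yz.
have := ca f cf; rewrite fmul_embl fmul_embr => /(congr1 (fun F => F k y)).
rewrite fy fz mul1r mulr0 => /eqP; by rewrite (negbTE a0).
Qed.

Lemma emb_single f : emb f = single 0 f. Proof. by []. Qed.

Lemma good_single k h : continuous h -> (forall y, h y != 0 -> Fix `|k| y) ->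
  good (single k h).
Proof.
move=> ch hs; split; first split.
- exists `|k|%N => m mk; rewrite /single ifN //.
  by apply: contraTneq mk => ->; rewrite ltnn.
- move=> m; rewrite /single; case: ifP => _; [exact: ch | exact: cst0].
- move=> m y; rewrite /single; case: ifP => [/eqP -> /hs|_]; last by rewrite eqxx.
  by move/zpowN_fix.
Qed.


Lemma good_emb f : continuous f -> good (emb f).
Proof. by move=> cf; apply: good_single; [exact: cf | move=> y _; rewrite /Fix]. Qed.

Lemma good_cont a k : good a -> continuous (a k).
Proof. by case=> [[_ c] _]; exact: c. Qed.

Lemma good_bnd a : good a -> exists N : nat, forall k : int, (N < `|k|)%N -> a k = (fun=> 0).
Proof. by case=> [[h _] _]. Qed.

Lemma support_int a k x : good a -> a k x != 0 -> (Fix `|k|)° x.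
Proof.
move=> ga ak; have := near_neq0 (good_cont (k:=k) ga) ak.
by apply: filterS => y /(ga.2 k y) /zpowN_fix.
Qed.

Lemma van1 a k x : good a -> ~ UFix sigma x -> k != 0 -> a k x = 0.
Proof.
move=> ga nU k0; apply/eqP; apply: contraT => h; exfalso; apply: nU.
exists `|k|%N; last exact: support_int h.
by rewrite /= absz_gt0.
Qed.

Lemma van2 a k x n : good a -> min_int_period sigma x n -> a k x != 0 ->
  (n %| `|k|)%N.
Proof.
move=> ga [n0 [fn mn]] ak.
have fk := support_int ga ak.
have fg : (Fix (gcdn `|k| n))° x.
  by apply: filterS (filterI fk fn) => y [h1 h2]; exact: Fix_gcd.
have g0 : (0 < gcdn `|k| n)%N by rewrite gcdn_gt0 n0 orbT.
have gn : (gcdn `|k| n <= n)%N by apply: dvdn_leq => //; exact: dvdn_gcdr.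
case: (ltnP (gcdn `|k| n) n) => h.
  by exfalso; apply: (mn _ _ fg); rewrite g0 h.
have e : gcdn `|k| n = n by apply/eqP; rewrite eqn_leq gn h.
by rewrite -e dvdn_gcdl.
Qed.

Lemma om1_mul a b x : good a -> ~ UFix sigma x ->
  omega1 x (fmul a b) = omega1 x a * omega1 x b.
Proof.
move=> ga nU; rewrite /omega1 /fmul (sum1 (j0 := 0)) ?oppr0 ?subrr //.
by move=> j j0; rewrite (van1 ga nU j0) mul0r.
Qed.

Lemma bnd_max a b : good a -> good b -> exists N : nat,
  forall k : int, (N < `|k|)%N -> a k = (fun=> 0) /\ b k = (fun=> 0).
Proof.
move=> /good_bnd [N1 h1] /good_bnd [N2 h2]; exists (maxn N1 N2) => k kN.
by split; [apply: h1 | apply: h2]; apply: leq_ltn_trans kN; rewrite ?leq_maxl ?leq_maxr.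
Qed.

Lemma bnd_mul (a : fsum) (n : nat) (x : X) (N : nat) (G : int -> C -> C) :
  (0 < n)%N -> (forall k : int, (N < `|k|)%N -> a k = (fun=> 0)) ->
  (forall j, G j 0 = 0) -> bnd (fun j => G j (a (j * n%:Z) x)) N.
Proof.
move=> n0 h G0 j jN; rewrite h ?G0 //.
rewrite abszM /=; apply: (leq_trans jN); by rewrite leq_pmulr.
Qed.

Lemma om2_add a b n x c : good a -> good b -> (0 < n)%N ->
  omega2 n x c (fadd a b) = omega2 n x c a + omega2 n x c b.
Proof.
move=> ga gb n0; have [N hN] := bnd_max ga gb.
rewrite /omega2 /fadd -(sumD (N := N)).
- by apply: eq_fsbigr => j _; rewrite mulrDl.
- by apply: (@bnd_mul a n x N (fun j z => z * c ^ j)) => // [k /hN[]|j]; rewrite ?mul0r.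
- by apply: (@bnd_mul b n x N (fun j z => z * c ^ j)) => // [k /hN[]|j]; rewrite ?mul0r.
Qed.

Lemma om2_scale (l : C) (a : fsum) n (x : X) c :
  omega2 n x c (fscale l a) = l * omega2 n x c a.
Proof.
by rewrite /omega2 /fscale -sumZ; apply: eq_fsbigr => j _; rewrite mulrA.
Qed.

Lemma om2_mul a b n x c : good a -> good b -> min_int_period sigma x n -> c != 0 ->
  omega2 n x c (fmul a b) = omega2 n x c a * omega2 n x c b.
Proof.
move=> ga gb mp c0; have n0 := mp.1.
have nz : n%:Z != 0 by rewrite eqz_nat -lt0n.
have [N hN] := bnd_max ga gb.
rewrite /omega2 -(cauchy (N := N)) //; last first.
- by apply: (@bnd_mul b n x N (fun j z => z)) => // k /hN[].
- by apply: (@bnd_mul a n x N (fun j z => z)) => // k /hN[].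
apply: eq_fsbigr => j _; congr (_ * _).
rewrite /fmul.
set G := fun k => a k x * b (j * n%:Z - k) (zpow (- k) x).
transitivity (\sum_(k \in [set: int]) G k) => //.
have hinj : set_inj [set: int] (fun i => i * n%:Z).
  by move=> i i' _ _ /mulIf; apply.
rewrite -(fsbig_widen ((fun i => i * n%:Z) @` [set: int])) //; last first.
  move=> k [_ nk]; rewrite /preimage /= /G.
  have [a0|a0] := eqVneq (a k x) 0; first by rewrite a0 mul0r.
  exfalso; apply: nk; exists (k %/ n%:Z)%Z => //.
  apply: divzK; rewrite dvdzE /=; exact: van2 ga mp a0.
rewrite fsbig_image //; apply: eq_fsbigr => i _; rewrite /G.
have [->|a0] := eqVneq (a (i * n%:Z) x) 0; first by rewrite !mul0r.
by rewrite (ga.2 _ _ a0) mulrBl.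
Qed.

Lemma om2_emb1 n (x : X) (c : C) : (0 < n)%N -> omega2 n x c (emb (fun=> (1 : C))) = 1.
Proof.
move=> n0; rewrite /omega2 (sum1 (j0 := 0)) ?mul0r /emb ?eqxx ?expr0z ?mulr1 //.
move=> j j0; rewrite ifN ?mul0r //.
by rewrite mulf_eq0 negb_or j0 eqz_nat -lt0n.
Qed.

Lemma iter_cont (f : X -> X) n : continuous f -> continuous (iter n f).
Proof.
move=> cf; elim: n => [|n IH] /=; first by move=> x; exact: cvg_id.
exact: (ccomp IH cf).
Qed.

Lemma zpow_cont k : continuous (zpow k).
Proof. by case: k => n /=; apply: iter_cont. Qed.

Lemma big_cont (s : seq int) (F : int -> X -> C) :
  (forall k, continuous (F k)) -> continuous (fun y => \sum_(k <- s) F k y).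
Proof.
move=> cF; elim: s => [|k s IH].
  have -> : (fun y : X => \sum_(k <- [::]) F k y) = (fun=> 0).
    by apply: funext => y; rewrite big_nil.
  exact: cst0.
have -> : (fun y => \sum_(j <- k :: s) F j y) = (fun y => F k y + \sum_(j <- s) F j y).
  by apply: funext => y; rewrite big_cons.
exact: (cD (cF k) IH).
Qed.

Lemma Fix_dvd p q y : Fix p y -> (p %| q)%N -> Fix q y.
Proof. by move=> fp /dvdnP [m ->]; exact: Fix_mul. Qed.

Lemma good_fadd a b : good a -> good b -> good (fadd a b).
Proof.
move=> ga gb; have [N hN] := bnd_max ga gb; split; first split.
- exists N => k /hN [ea eb]; apply: funext => y; by rewrite /fadd ea eb addr0.
- move=> k; rewrite /fadd; exact: (cD (good_cont (k:=k) ga) (good_cont (k:=k) gb)).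
- move=> k y; rewrite /fadd; have [a0|a0] := eqVneq (a k y) 0.
    by rewrite a0 add0r; apply: gb.2.
  by move=> _; apply: ga.2.
Qed.

Lemma good_fscale l a : good a -> good (fscale l a).
Proof.
move=> ga; have [N hN] := good_bnd ga; split; first split.
- exists N => k /hN ea; apply: funext => y; by rewrite /fscale ea mulr0.
- move=> k; rewrite /fscale; apply: cM; [exact: cK | exact: good_cont].
- move=> k y; rewrite /fscale mulf_eq0 negb_or => /andP[_]; exact: ga.2.
Qed.

Lemma good_fmul a b : good a -> good b -> good (fmul a b).
Proof.
move=> ga gb; have [N hN] := bnd_max ga gb.
have bndF m y : bnd (fun k => a k y * b (m - k) (zpow (- k) y)) N.
  by move=> k /hN [-> _]; rewrite mul0r.
split; first split.
- exists (2 * N)%N => m mN; apply: funext => y; rewrite /fmul (sumW (bndF m y)).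
  apply: big1_seq => k /andP[_ kw].
  have kN : (`|k| <= N)%N.
    by move: kw => /imfsetP [i + ->]; rewrite mem_iota => /andP[_ ?]; lia.
  rewrite (proj2 (hN (m - k) _)) ?mulr0 //; lia.
- move=> m.
  have -> : fmul a b m = (fun y => \sum_(k <- win N) a k y * b (m - k) (zpow (- k) y)).
    by apply: funext => y; rewrite /fmul (sumW (bndF m y)).
  apply: big_cont => k; apply: cM; first exact: good_cont.
  exact: (ccomp (zpow_cont (k := - k)) (good_cont (k := m - k) gb)).
- move=> m y; rewrite /fmul => hs.
  case: (pselect (exists k, a k y * b (m - k) (zpow (- k) y) != 0)) => [[k]|nk]; last first.
    move: hs; rewrite fsbig1 ?eqxx // => k _.
    by apply/eqP; apply/negPn/negP => h; apply: nk; exists k.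
  rewrite mulf_eq0 negb_or => /andP[ak bk].
  have yk := ga.2 _ _ ak; rewrite yk in bk; have ymk := gb.2 _ _ bk.
  move: yk ymk => /zpowN_fix yk /zpowN_fix ymk; apply/zpowN_fix.
  apply: (Fix_dvd (Fix_gcd yk ymk)).
  have : (gcdn (absz k) (absz (m - k)%R) %| absz (k + (m - k))%R)%N.
    rewrite -[X in (X %| _)%N]absz_nat -dvdzE; apply: rpredD; rewrite dvdzE absz_nat.
      exact: dvdn_gcdl.
    exact: dvdn_gcdr.
  by rewrite subrKC.
Qed.

Lemma cst_cont (c : C) : continuous (fun _ : X => c).
Proof. move=> x; exact: cvg_cst. Qed.

Lemma good1 : good (emb (fun=> (1 : C))).
Proof. by apply: good_emb; exact: cst_cont. Qed.

Lemma char_ext (w v : fsum -> C) : {in CM, w =1 v} ->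
  is_character sigma sigmai v -> is_character sigma sigmai w.
Proof.
move=> wv [hadd hsc hmul [a0 CMa0 va0]].
have gCM a : CM a -> good a by move=> h; exact: CM_good.
have CMg a : good a -> CM a by move=> h; exact: good_CM.
split.
- move=> a b ha hb; move: (ha) (hb) => /set_mem ha' /set_mem hb'.
  rewrite !wv //; first exact: hadd.
  by apply: mem_set; apply: CMg; apply: good_fadd; apply: gCM.
- move=> l a ha; move: (ha) => /set_mem ha'.
  rewrite !wv //; first exact: hsc.
  by apply: mem_set; apply: CMg; apply: good_fscale; apply: gCM.
- move=> a b ha hb; move: (ha) (hb) => /set_mem ha' /set_mem hb'.
  rewrite !wv //; first exact: hmul.
  by apply: mem_set; apply: CMg; apply: good_fmul; apply: gCM.
- by exists a0 => //; rewrite wv //; apply: mem_set.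
Qed.

Lemma om1_char x : ~ UFix sigma x -> is_character sigma sigmai (omega1 (R:=R) x).
Proof.
move=> nU; split.
- by [].
- by [].
- move=> a b /set_mem ha _; apply: om1_mul => //; exact: CM_good.
- exists (emb (fun=> 1)); first exact: good_CM good1.
  by rewrite /omega1 /emb eqxx oner_neq0.
Qed.

Lemma om2_char x n (c : C) : min_int_period sigma x n -> c != 0 ->
  is_character sigma sigmai (omega2 n x c).
Proof.
move=> mp c0; have n0 := mp.1; split.
- move=> a b /set_mem ha /set_mem hb; apply: om2_add => //; exact: CM_good.
- by move=> l a _; exact: om2_scale.
- move=> a b /set_mem ha /set_mem hb; apply: om2_mul => //; exact: CM_good.
- exists (emb (fun=> 1)); first exact: good_CM good1.
  by rewrite om2_emb1 // oner_neq0.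
Qed.

Section Fwd.
Variable w : fsum -> C.
Hypothesis Hw : is_character sigma sigmai w.

Lemma wadd a b : good a -> good b -> w (fadd a b) = w a + w b.
Proof. by move=> ga gb; case: Hw => h _ _ _; apply: h; apply: mem_set; apply: good_CM. Qed.
Lemma wscale (l : C) a : good a -> w (fscale l a) = l * w a.
Proof. by move=> ga; case: Hw => _ h _ _; apply: h; apply: mem_set; apply: good_CM. Qed.
Lemma wmul a b : good a -> good b -> w (fmul a b) = w a * w b.
Proof. by move=> ga gb; case: Hw => _ _ h _; apply: h; apply: mem_set; apply: good_CM. Qed.

Lemma w_emb1 : w (emb (fun=> 1)) = 1.
Proof.
case: Hw => _ _ _ [a0 /CM_good ga0 wa0].
have e : fmul a0 (emb (fun=> 1)) = a0.
  by rewrite fmul_embr; apply: funext => m; apply: funext => y; rewrite mulr1.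
have := wmul ga0 good1; rewrite e => h.
by apply: (mulfI wa0); rewrite -h mulr1.
Qed.

Lemma emb_add (f g : X -> C) : fadd (emb f) (emb g) = emb (fun y => f y + g y).
Proof.
by apply: funext => k; apply: funext => y; rewrite /fadd /emb; case: ifP => _; rewrite ?addr0.
Qed.
Lemma emb_scale (l : C) (f : X -> C) : fscale l (emb f) = emb (fun y => l * f y).
Proof.
by apply: funext => k; apply: funext => y; rewrite /fscale /emb; case: ifP => _; rewrite ?mulr0.
Qed.
Lemma emb_mul (f g : X -> C) : fmul (emb f) (emb g) = emb (fun y => f y * g y).
Proof.
rewrite fmul_embl; apply: funext => k; apply: funext => y; rewrite /emb.
by case: ifP => _; rewrite ?mulr0.
Qed.

Lemma wemb_add (f g : X -> C) : continuous f -> continuous g ->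
  w (emb (fun y => f y + g y)) = w (emb f) + w (emb g).
Proof. by move=> cf cg; rewrite -emb_add wadd; [| exact: good_emb cf | exact: good_emb cg]. Qed.
Lemma wemb_mul (f g : X -> C) : continuous f -> continuous g ->
  w (emb (fun y => f y * g y)) = w (emb f) * w (emb g).
Proof. by move=> cf cg; rewrite -emb_mul wmul; [| exact: good_emb cf | exact: good_emb cg]. Qed.
Lemma wemb_scale (l : C) (f : X -> C) : continuous f ->
  w (emb (fun y => l * f y)) = l * w (emb f).
Proof. by move=> cf; rewrite -emb_scale wscale; [| exact: good_emb cf]. Qed.
Lemma wemb_cst (c : C) : w (emb (fun=> c)) = c.
Proof.
have -> : (fun _ : X => c) = (fun y => c * (fun=> 1) y).
  by apply: funext => y; rewrite mulr1.
rewrite wemb_scale; first by rewrite w_emb1 mulr1.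
exact: cst_cont.
Qed.

Lemma realC_inj : injective realC.
Proof. exact: complexI. Qed.

Lemma nR_realC r : nR (realC r) = `|r|.
Proof. by apply: realC_inj; rewrite realC_nR normC_real. Qed.

Lemma nRM a b : nR (a * b) = nR a * nR b.
Proof. by apply: realC_inj; rewrite realCM !realC_nR normrM. Qed.

Lemma nR_le a b : `|a| <= `|b| -> nR a <= nR b.
Proof. by rewrite -!realC_nR realC_le. Qed.

Lemma nRD a b : nR (a + b) <= nR a + nR b.
Proof. rewrite -realC_le /realC rmorphD /= -!/(realC _) !realC_nR; exact: ler_normD. Qed.

Lemma nR_lt1 z : (`|z| < 1) = (nR z < 1).
Proof. by rewrite -realC_nR -realC1 realC_lt. Qed.

Lemma w_point : exists x, forall f, continuous f -> w (emb f) = f x.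
Proof.
pose Kc := [set g : X -> C | continuous g /\ w (emb g) = 0].
pose Bs := fun g : X -> C => [set y | `|g y| < 1].
have K0 : Kc (fun=> 0) by split; [exact: cst_cont | exact: wemb_cst].
have Kint : forall i j, Kc i -> Kc j -> exists2 k, Kc k & Bs k `<=` Bs i `&` Bs j.
  move=> g1 g2 [c1 w1] [c2 w2].
  pose h := fun y => g1 y * (g1 y)^*%R + g2 y * (g2 y)^*%R.
  have cc1 : continuous (fun y => (g1 y)^*%R) by exact: (ccomp c1 (@conj_cont R)).
  have cc2 : continuous (fun y => (g2 y)^*%R) by exact: (ccomp c2 (@conj_cont R)).
  exists h.
    split; first exact: (cD (cM c1 cc1) (cM c2 cc2)).
    rewrite wemb_add; [|exact: (cM c1 cc1)|exact: (cM c2 cc2)].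
    rewrite wemb_mul; [|exact: c1|exact: cc1].
    rewrite wemb_mul; [|exact: c2|exact: cc2].
    by rewrite w1 w2 !mul0r addr0.
  move=> y; rewrite /Bs /= => hl.
  have p1 := nR_ge0 (g1 y); have p2 := nR_ge0 (g2 y).
  have eh : h y = realC (nR (g1 y) ^+ 2 + nR (g2 y) ^+ 2).
    by rewrite /h -!normCK -!realC_nR /realC rmorphD /= !rmorphXn.
  move: hl; rewrite eh normC_real ger0_norm; last by rewrite addr_ge0 // sqr_ge0.
  rewrite -realC1 realC_lt !nR_lt1 => hl.
  by split; nra.
have FF : Filter (filter_from Kc Bs) by apply: filter_from_filter; [exists (fun=> 0) | ].
have PF : ProperFilter (filter_from Kc Bs).
  apply: filter_from_proper => g [cg wg].
  case: (pselect (exists y, `|g y| < 1)) => // nB; exfalso.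
  have g0 y : g y != 0.
    by apply/eqP => e; apply: nB; exists y; rewrite e normr0 ltr01.
  have cgi : continuous (fun y => (g y)^-1).
    by move=> y; apply: continuousV; [exact: g0 | exact: cg].
  have : w (emb (fun y => g y * (g y)^-1)) = 0.
    by rewrite wemb_mul; [rewrite wg mul0r | exact: cg | exact: cgi].
  have -> : (fun y => g y * (g y)^-1) = (fun=> 1).
    by apply: funext => y; rewrite mulfV.
  by rewrite wemb_cst => /eqP; rewrite oner_eq0.
have [x [_ clx]] := cX PF (filterT).
exists x => f cf.
pose g := fun y => f y + (- w (emb f)).
have cg : continuous g by rewrite /g; apply: cD; [exact: cf | exact: cst_cont].
have wg : w (emb g) = 0.
  by rewrite /g wemb_add; [rewrite wemb_cst subrr | exact: cf | exact: cst_cont].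
suff : g x = 0 by rewrite /g => /eqP; rewrite addr_eq0 opprK => /eqP.
apply/eqP; apply: contraT => gx0; exfalso.
pose d := nR (g x).
have d0 : 0 < d by rewrite lt_def nR_ge0 andbT; apply: contra gx0 => /eqP/(congr1 realC); rewrite realC_nR realC0 => /eqP; rewrite normr_eq0.
pose g' := fun y => realC (2 / d) * g y.
have cg' : continuous g' by rewrite /g'; apply: cM; [exact: cst_cont | exact: cg].
have Bg' : filter_from Kc Bs (Bs g').
  exists g' => //; split => //.
  by rewrite /g' wemb_scale; [rewrite wg mulr0 | exact: cg].
have e0 : (0 : C) < realC (d / 2) by rewrite -realC0 realC_lt divr_gt0.
have Nx := @cvgr_dist_lt _ _ _ _ (nbhs_filter x) _ _ (cg x) _ e0.
have [y [By Ny]] := clx _ _ Bg' Nx.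
move: By Ny; rewrite /Bs /g' /= nR_lt1 nRM nR_realC => By.
rewrite -realC_nR realC_lt => Ny.
have tri : d <= nR (g x - g y) + nR (g y).
  by rewrite /d; have := nRD (g x - g y) (g y); rewrite subrK.
have hy : 0 <= nR (g y) := nR_ge0 _.
rewrite ger0_norm in By; last by rewrite divr_ge0 // ltW.
have : 2 * nR (g y) < d.
  have e : 2 / d * d = 2 by rewrite divfK // gt_eqF.
  nra.
lra.
Qed.

Lemma van_single x k h : (forall f, continuous f -> w (emb f) = f x) ->
  continuous h -> h x = 0 -> (forall y, h y != 0 -> Fix `|k| y) ->
  w (single k h) = 0.
Proof.
move=> hx ch h0 hs.
pose s := fun y => Sq (h y); pose t := fun y => Fq (h y).
have cs' : continuous s by exact: (ccomp ch (@Sq_cont R)).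
have ct : continuous t by exact: (ccomp ch (@Fq_cont R)).
have gt : good (single k t).
  apply: good_single; first exact: ct.
  move=> y ty; apply: hs; apply: contra ty => /eqP hy.
  by rewrite /t hy /Fq mul0r.
have e : single k h = fmul (emb s) (single k t).
  rewrite fmul_embl; apply: funext => m; apply: funext => y; rewrite /single.
  by case: ifP => _; [rewrite /s /t FqE | rewrite mulr0].
rewrite e wmul; [|exact: good_emb cs'|exact: gt].
by rewrite hx; [rewrite /s h0 Sq0 mul0r | exact: cs'].
Qed.

Definition trunc (s : seq int) (a : fsum) : fsum :=
  fun k => if k \in s then a k else (fun=> 0).

Lemma good_trunc s a : good a -> good (trunc s a).
Proof.
move=> ga; have [N hN] := good_bnd ga; split; first split.
- exists N => k kN; rewrite /trunc; case: ifP => _ //; exact: hN.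
- move=> k; rewrite /trunc; case: ifP => _; [exact: good_cont ga | exact: cst_cont].
- move=> k y; rewrite /trunc; case: ifP => _; [exact: ga.2 | by rewrite eqxx].
Qed.

Lemma good_single_a a k : good a -> good (single k (a k)).
Proof.
move=> ga; apply: good_single; first exact: good_cont ga.
by move=> y /(ga.2 k y) /zpowN_fix.
Qed.

Lemma w_trunc s a : uniq s -> good a ->
  w (trunc s a) = \sum_(k <- s) w (single k (a k)).
Proof.
move=> us ga; elim: s us => [|k s IH] /=.
  move=> _; rewrite big_nil.
  have -> : trunc [::] a = emb (fun=> 0).
    by apply: funext => m; apply: funext => y; rewrite /trunc /emb; case: ifP.
  exact: wemb_cst.
move=> /andP[ks us]; rewrite big_cons -IH //.
have -> : trunc (k :: s) a = fadd (single k (a k)) (trunc s a).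
  apply: funext => m; apply: funext => y; rewrite /trunc /fadd /single inE.
  have [->|mk] := eqVneq m k; first by rewrite (negbTE ks) addr0.
  by rewrite /= add0r.
by rewrite wadd; [|exact: good_single_a|exact: good_trunc].
Qed.

Lemma w_decomp a : good a -> exists N,
  (forall k : int, (N < `|k|)%N -> a k = (fun=> 0)) /\
  w a = \sum_(k <- win N) w (single k (a k)).
Proof.
move=> ga; have [N hN] := good_bnd ga; exists N; split => //.
rewrite -(w_trunc (s := win N) (a := a)) //; last exact: fset_uniq.
apply: (congr1 w); apply: funext => k; rewrite /trunc; case: ifPn => // kw.
rewrite hN //; rewrite ltnNge; apply: contra kw; exact: in_win.
Qed.

Lemma caseI x : (forall f, continuous f -> w (emb f) = f x) -> ~ UFix sigma x ->
  {in CM, w =1 omega1 x}.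
Proof.
move=> hx nU a /set_mem /CM_good ga.
have [N [hN ->]] := w_decomp ga.
have w0 : (0 : int) \in win N by apply: in_win.
rewrite (bigD1_seq 0 w0 (fset_uniq _)) /=.
rewrite big1_seq ?addr0.
  by rewrite -emb_single hx //; exact: good_cont ga.
move=> k /andP[k0 _]; apply: (van_single hx).
- exact: good_cont ga.
- exact: van1 ga nU k0.
- by move=> y /(ga.2 k y) /zpowN_fix.
Qed.

Section CaseII.
Variables (x : X) (n : nat) (u : X -> C).
Hypothesis hx : forall f, continuous f -> w (emb f) = f x.
Hypothesis mp : min_int_period sigma x n.
Hypotheses (cu : continuous u) (ux : u x = 1).
Hypothesis us : forall y, u y != 0 -> Fix n y.

Let n0 : (0 < n)%N := mp.1.

Lemma FixM y (j : int) : Fix n y -> Fix `|j * n%:Z| y.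
Proof. by move=> f; rewrite abszM absz_nat; exact: Fix_mul. Qed.

Lemma FixMz y (j : int) : Fix n y -> zpow (- (j * n%:Z)) y = y.
Proof. by move=> f; apply/zpowN_fix; exact: FixM. Qed.

Lemma good_sh (m : int) h : continuous h -> (forall y, h y != 0 -> Fix n y) ->
  (n%:Z %| m)%Z -> good (single m h).
Proof.
move=> ch hs /dvdzP [j ->]; apply: good_single; first exact: ch.
by move=> y /hs; exact: FixM.
Qed.

Lemma dvdn_n : (n%:Z %| n%:Z)%Z. Proof. exact: dvdzz. Qed.
Lemma dvdn_Nn : (n%:Z %| - n%:Z)%Z. Proof. by rewrite dvdzE abszN dvdnn. Qed.

Lemma step (m d : int) h : continuous h -> (forall y, h y != 0 -> Fix n y) ->
  (n%:Z %| m)%Z -> (n%:Z %| d)%Z ->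
  w (single (m + d) h) = w (single m h) * w (single d u).
Proof.
move=> ch hs dm dd.
have dmd : (n%:Z %| m + d)%Z by apply: rpredD.
have c1 : continuous (fun y => h y * u y) by exact: cM ch cu.
have c2 : continuous (fun y => h y * (1 - u y)).
  by apply: cM; [exact: ch | apply: cB; [exact: cst_cont | exact: cu]].
have s1 : forall y, h y * u y != 0 -> Fix n y.
  by move=> y; rewrite mulf_eq0 negb_or => /andP[/hs].
have s2 : forall y, h y * (1 - u y) != 0 -> Fix n y.
  by move=> y; rewrite mulf_eq0 negb_or => /andP[/hs].
have -> : single (m + d) h =
  fadd (single (m + d) (fun y => h y * u y)) (single (m + d) (fun y => h y * (1 - u y))).
  apply: funext => k; apply: funext => y; rewrite /fadd /single.
  by case: ifP => _; [ring | rewrite addr0].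
rewrite wadd; [| apply: good_sh; [exact: c1 | exact: s1 | exact: dmd] | apply: good_sh; [exact: c2 | exact: s2 | exact: dmd]].
rewrite (@van_single x (m + d) (fun y => h y * (1 - u y))); last first.
- by move=> y /s2; move: dmd => /dvdzP [j ->]; exact: FixM.
- by rewrite ux subrr mulr0.
- exact: c2.
- exact: hx.
rewrite addr0 -wmul; [| apply: good_sh; [exact: ch | exact: hs | exact: dm] | apply: good_sh; [exact: cu | exact: us | exact: dd]].
congr (w _); rewrite fmul_single.
apply: funext => k; apply: funext => y; rewrite /single; case: ifP => // _.
have [h0|h0] := eqVneq (h y) 0; first by rewrite h0 !mul0r.
by move: dm => /dvdzP [j ->]; rewrite FixMz //; exact: hs.
Qed.

Let c := w (single n%:Z u).
Let c' := w (single (- n%:Z) u).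

Lemma cc' : c * c' = 1.
Proof.
have := @step n%:Z (- n%:Z) u cu us dvdn_n dvdn_Nn.
by rewrite subrr -emb_single hx // ux.
Qed.

Lemma c_neq0 : c != 0.
Proof. by apply/eqP => e; have := cc'; rewrite e mul0r => /eqP; rewrite eq_sym oner_eq0. Qed.

Lemma c'E : c' = c^-1.
Proof. by apply: (mulfI c_neq0); rewrite cc' mulfV // c_neq0. Qed.

Lemma wjn_pos h (k : nat) : continuous h -> (forall y, h y != 0 -> Fix n y) ->
  w (single (k%:Z * n%:Z) h) = h x * c ^+ k.
Proof.
move=> ch hs; elim: k => [|k IH].
  by rewrite mul0r -emb_single hx // expr0 mulr1.
have -> : (k.+1%:Z * n%:Z) = k%:Z * n%:Z + n%:Z by rewrite intS mulrDl mul1r addrC.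
rewrite step; [| exact: ch | exact: hs | by apply: dvdz_mull; exact: dvdn_n | exact: dvdn_n].
by rewrite IH exprSr mulrA.
Qed.

Lemma wjn_neg h (k : nat) : continuous h -> (forall y, h y != 0 -> Fix n y) ->
  w (single (- k%:Z * n%:Z) h) = h x * c^-1 ^+ k.
Proof.
move=> ch hs; elim: k => [|k IH].
  by rewrite oppr0 mul0r -emb_single hx // expr0 mulr1.
have -> : (- k.+1%:Z * n%:Z) = - k%:Z * n%:Z + - n%:Z.
  by rewrite intS opprD mulrDl mulN1r addrC.
rewrite step; [| exact: ch | exact: hs | by apply: dvdz_mull; exact: dvdn_n | exact: dvdn_Nn].
by rewrite IH -/c' c'E exprSr mulrA.
Qed.

Lemma wjn h (j : int) : continuous h -> (forall y, h y != 0 -> Fix n y) ->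
  w (single (j * n%:Z) h) = h x * c ^ j.
Proof.
move=> ch hs; case: j => k.
  exact: wjn_pos.
rewrite NegzE wjn_neg; [| exact: ch | exact: hs].
by rewrite exprVn exprnN.
Qed.

Lemma wG a k : good a -> w (single k (a k)) =
  if (n%:Z %| k)%Z then a k x * c ^ (k %/ n%:Z)%Z else 0.
Proof.
move=> ga; have cak := good_cont (k := k) ga.
case: ifPn => dk; last first.
  apply: (van_single hx cak); last by move=> y /(ga.2 k y) /zpowN_fix.
  apply/eqP; apply: contraT => ak; move: dk; rewrite dvdzE absz_nat.
  by rewrite (van2 ga mp ak).
have c1 : continuous (fun y => a k y * u y) by exact: cM cak cu.
have c2 : continuous (fun y => a k y * (1 - u y)).
  by apply: cM; [exact: cak | apply: cB; [exact: cst_cont | exact: cu]].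
have -> : single k (a k) =
  fadd (single k (fun y => a k y * u y)) (single k (fun y => a k y * (1 - u y))).
  apply: funext => m; apply: funext => y; rewrite /fadd /single.
  by case: ifP => _; [ring | rewrite addr0].
have s2 : forall y, a k y * (1 - u y) != 0 -> Fix `|k| y.
  by move=> y; rewrite mulf_eq0 negb_or => /andP[/(ga.2 k y) /zpowN_fix].
have s1 : forall y, a k y * u y != 0 -> Fix n y.
  by move=> y; rewrite mulf_eq0 negb_or => /andP[_ /us].
rewrite wadd; last first.
- by apply: good_single; [exact: c2 | exact: s2].
- by apply: good_sh; [exact: c1 | exact: s1 | exact: dk].
rewrite (@van_single x k (fun y => a k y * (1 - u y))); last first.
- exact: s2.
- by rewrite ux subrr mulr0.
- exact: c2.
- exact: hx.
rewrite addr0 -{1}(divzK dk) wjn; [by rewrite ux mulr1 | exact: c1 | exact: s1].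
Qed.

Lemma caseII_eq : {in CM, w =1 omega2 n x c}.
Proof.
move=> a /set_mem /CM_good ga.
have [N [hN ->]] := w_decomp ga.
have nz : n%:Z != 0 by rewrite eqz_nat -lt0n.
pose G k := if (n%:Z %| k)%Z then a k x * c ^ (k %/ n%:Z)%Z else 0.
have -> : \sum_(k <- win N) w (single k (a k)) = \sum_(k <- win N) G k.
  by apply: eq_bigr => k _; rewrite wG.
rewrite -(sumW (N := N)); last first.
  move=> k kN; rewrite /G hN //; case: ifP => _ //; by rewrite mul0r.
rewrite /omega2.
have hinj : set_inj [set: int] (fun i => i * n%:Z).
  by move=> i i' _ _ /mulIf; apply.
rewrite -(fsbig_widen ((fun i => i * n%:Z) @` [set: int])) //; last first.
  move=> k [_ nk]; rewrite /preimage /= /G; case: ifPn => // dk.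
  by exfalso; apply: nk; exists (k %/ n%:Z)%Z => //; exact: divzK.
rewrite fsbig_image //; apply: eq_fsbigr => j _; rewrite /G.
by rewrite dvdz_mull ?dvdzz // mulzK.
Qed.

Lemma caseII_all : exists c0 : C, c0 != 0 /\ {in CM, w =1 omega2 n x c0}.
Proof. exists c; split; [exact: c_neq0 | exact: caseII_eq]. Qed.

End CaseII.



Lemma char_fwd :
  (exists x : X, ~ UFix sigma x /\ {in CM, w =1 omega1 (R:=R) x})
  \/ (exists (x : X) (n : nat) (c : C),
        min_int_period sigma x n /\ c != 0 /\ {in CM, w =1 omega2 n x c}).
Proof.
have [x hx] := w_point.
case: (pselect (UFix sigma x)) => [Ux|nU]; last by left; exists x; split => //; exact: caseI.
right.
have exP : exists m, (0 < m)%N && `[< (Fix m)° x >].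
  by case: Ux => q q0 fq; exists q; rewrite q0 /=; apply/asboolP.
case: (ex_minnP exP) => n /andP[n0 /asboolP fn] nmin.
have mp : min_int_period sigma x n.
  split => //; split => // m /andP[m0 mn] fm.
  have := nmin m; rewrite m0 /= => /(_ (introT (asboolP _) fm)).
  by rewrite leqNgt mn.
have [u [cu ux uU]] := @bump R X hX cX x _ (@open_interior _ (Fix n)) fn.
have us : forall y, u y != 0 -> Fix n y.
  move=> y uy; apply: (@interior_subset _ (Fix n)).
  by case: (pselect ((Fix n)° y)) => // /uU; move/eqP: uy.
have [c [c0 hc]] := caseII_all hx mp cu ux us.
by exists x, n, c.
Qed.

End Fwd.

Lemma main_char w : is_character sigma sigmai w <->
  ((exists x : X, ~ UFix sigma x /\ {in CM, w =1 omega1 (R:=R) x})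
   \/ (exists (x : X) (n : nat) (c : C),
        min_int_period sigma x n /\ c != 0 /\ {in CM, w =1 omega2 n x c})).
Proof.
split; first exact: char_fwd.
case=> [[x [nU hw]]|[x [n [c [mp [c0 hw]]]]]].
  exact: char_ext hw (om1_char nU).
exact: char_ext hw (om2_char mp c0).
Qed.

Lemma om1_emb (x : X) (f : X -> C) : omega1 (R:=R) x (emb f) = f x.
Proof. by rewrite /omega1 /emb eqxx. Qed.

Lemma om2_emb n (x : X) (c : C) (f : X -> C) : (0 < n)%N -> omega2 n x c (emb f) = f x.
Proof.
move=> n0; rewrite /omega2 (sum1 (j0 := 0)) /emb ?mul0r ?eqxx ?expr0z ?mulr1 //.
move=> j j0; rewrite ifN ?mul0r //.
by rewrite mulf_eq0 negb_or j0 eqz_nat -lt0n.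
Qed.

Lemma sep_emb (x y : X) (F G : fsum -> C) :
  (forall f, continuous f -> F (emb f) = f x) ->
  (forall f, continuous f -> G (emb f) = f y) ->
  {in CM, F =1 G} -> x = y.
Proof.
move=> hF hG hFG; apply/eqP; apply: contraT => xy.
have [f [cf fx fy]] := @separate R X hX cX x y xy.
have := hFG (emb f); rewrite hF // hG // fx fy => h.
have /eqP : (1 : C) = 0 by apply: h; apply: mem_set; apply: good_CM; exact: good_emb cf.
by rewrite oner_eq0.
Qed.

Lemma uniq1 (x y : X) : {in CM, omega1 (R:=R) x =1 omega1 (R:=R) y} -> x = y.
Proof. by apply: sep_emb => f _; rewrite om1_emb. Qed.

Lemma min_uniq (x : X) n m : min_int_period sigma x n -> min_int_period sigma x m -> n = m.
Proof.
move=> [n0 [fn mn]] [m0 [fm mm]].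
case: (ltngtP n m) => // h; exfalso.
  by apply: (mm n) => //; rewrite n0 h.
by apply: (mn m) => //; rewrite m0 h.
Qed.

Lemma uniq2 (x y : X) n m (c d : C) : min_int_period sigma x n -> min_int_period sigma y m ->
  {in CM, omega2 n x c =1 omega2 m y d} -> x = y /\ c = d.
Proof.
move=> mx my h.
have xy : x = y.
  by apply: (sep_emb (F := omega2 n x c) (G := omega2 m y d)) => // f _;
    rewrite om2_emb //; [exact: mx.1 | exact: my.1].
subst y; have nm := min_uniq mx my; subst m; split => //.
have [n0 [fn _]] := mx.
have [u [cu ux uU]] := @bump R X hX cX x _ (@open_interior _ (Fix n)) fn.
have us : forall y, u y != 0 -> Fix n y.
  move=> y uy; apply: (@interior_subset _ (Fix n)).
  by case: (pselect ((Fix n)° y)) => // /uU; move/eqP: uy.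
have ge : good (single n u) by apply: good_single; [exact: cu | exact: us].
have om e : omega2 n x e (single n u) = e.
  rewrite /omega2 (sum1 (j0 := 1)) /single ?mul1r ?eqxx ?ux ?mul1r ?expr1z //.
  move=> j j1; rewrite ifN ?mul0r //.
  apply: contra j1 => /eqP e1; apply/eqP.
  by apply: (mulIf (x := n%:Z)); [rewrite eqz_nat -lt0n | rewrite e1 mul1r].
by rewrite -(om c) -(om d); apply: h; apply: mem_set; exact: good_CM ge.
Qed.

Lemma uniq3 (x y : X) n (c : C) : ~ UFix sigma x -> min_int_period sigma y n ->
  ~ {in CM, omega1 (R:=R) x =1 omega2 n y c}.
Proof.
move=> nU my h.
have xy : x = y.
  by apply: (sep_emb (F := omega1 x) (G := omega2 n y c)) => // f _;
    rewrite ?om1_emb // om2_emb //; exact: my.1.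
subst y; apply: nU; case: my => n0 [fn _]; by exists n.
Qed.

End Alg.

Theorem lemma3p6 (R : realType) (X : topologicalType) (sigma sigmai : X -> X) :
  hausdorff_space X -> compact [set: X] -> [set: X] !=set0 ->
  continuous sigma -> continuous sigmai ->
  cancel sigma sigmai -> cancel sigmai sigma ->
  (* the characters are exactly the omega_x and omega_{x,c} *)
  (forall w : fsum R X -> Cplx R,
     is_character sigma sigmai w <->
     ((exists x : X, ~ UFix sigma x /\
          {in commutant00 (R:=R) sigma sigmai, w =1 omega1 (R:=R) x})
      \/ (exists (x : X) (n : nat) (c : Cplx R),
            min_int_period sigma x n /\ c != 0 /\
            {in commutant00 (R:=R) sigma sigmai, w =1 omega2 n x c}))) /\
  (* without multiple occurrences *)
  (forall x y : X, ~ UFix sigma x -> ~ UFix sigma y ->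
     {in commutant00 (R:=R) sigma sigmai, omega1 (R:=R) x =1 omega1 (R:=R) y} -> x = y) /\
  (forall (x y : X) (n m : nat) (c d : Cplx R),
     min_int_period sigma x n -> min_int_period sigma y m -> c != 0 -> d != 0 ->
     {in commutant00 (R:=R) sigma sigmai, omega2 n x c =1 omega2 m y d} ->
     x = y /\ c = d) /\
  (forall (x y : X) (n : nat) (c : Cplx R),
     ~ UFix sigma x -> min_int_period sigma y n -> c != 0 ->
     ~ {in commutant00 (R:=R) sigma sigmai, omega1 (R:=R) x =1 omega2 n y c}).
Proof.
move=> hX cX _ cs csi can1 can2; split.
  by move=> w; exact: (main_char hX cX cs csi can1 can2 w).
split.
  by move=> x y _ _ h; exact: (uniq1 (sigma := sigma) hX cX can1 can2 h).
split.
  by move=> x y n m c d mx my _ _ h; exact: (uniq2 hX cX can1 can2 mx my h).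
by move=> x y n c nU my _; exact: (uniq3 hX cX can1 can2 nU my).
Qed.
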